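(* Let $N\ge4$, $M\ge1$, $\mathcal I_N=\{(i,j):i,j\in\{1,\dots,N\},i\ne j\}$, and for each $(i,j)\in\mathcal I_N$ let $Y_{ij}\in\{0,\dots,M\}$ and $X_{ij}\in\mathbb R^k$. Suppose that, conditional on $\mathbf X=(X_{ij})$ and fixed effects $\mathbf F=((\alpha_i,\gamma_i))_{i=1}^N$, the $Y_{ij}$ are independent across dyads with \[ P(Y_{ij}=m\mid X_{ij},F_i,F_j)=\begin{cases}1-\Lambda(X_{ij}'\beta_0+\alpha_i+\gamma_j-\lambda_{10}), & m=0,\\ \Lambda(X_{ij}'\beta_0+\alpha_i+\gamma_j-\lambda_{m0})-\Lambda(X_{ij}'\beta_0+\alpha_i+\gamma_j-\lambda_{m+1,0}), & 1\le m\le M-1,\\ \Lambda(X_{ij}'\beta_0+\alpha_i+\gamma_j-\lambda_{M0}), & m=M,\end{cases} \] where $\Lambda(z)=e^z/(1+e^z)$, $\beta_0\in\mathbb R^k$, and $\lambda_{10}\le\lambda_{20}\le\dots\le\lambda_{M0}$ are common thresholds. Let $D_{ij}(m)=\mathbf 1\{Y_{ij}\ge m\}$. For a tetrad $\sigma=(i_1,i_2,j_1,j_2)$ of four distinct nodes and a cutoff vector $\mathbf m=(m_{11},m_{12},m_{21},m_{22})\in\{1,\dots,M\}^4$ define \[ Z_\sigma(\mathbf m)=\tfrac12\Big((D_{i_1j_1}(m_{11})-D_{i_1j_2}(m_{12}))-(D_{i_2j_1}(m_{21})-D_{i_2j_2}(m_{22}))\Big), \] $X_\sigma=(X_{i_1j_1},X_{i_1j_2},X_{i_2j_1},X_{i_2j_2})$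 and $r_\sigma=(X_{i_1j_1}-X_{i_1j_2})-(X_{i_2j_1}-X_{i_2j_2})$. Then \[ P\big(Z_\sigma(\mathbf m)=1\mid Z_\sigma(\mathbf m)\in\{-1,+1\},X_\sigma\big)=\Lambda\big(r_\sigma'\beta_0-\lambda_0(\mathbf m)\big), \] where $\lambda_0(\mathbf m)=(\lambda_{m_{11}0}-\lambda_{m_{12}0})-(\lambda_{m_{21}0}-\lambda_{m_{22}0})$.
   Context: $\alpha_i$ is a sender fixed effect and $\gamma_j$ a receiver fixed effect, both constant across outcome categories. *)

(* Defs.v *)
From HB Require Import structures.
From mathcomp Require Import all_boot all_order all_algebra.
From mathcomp Require Import reals.
From mathcomp Require Import sequences exp.
Set Implicit Arguments. Unset Strict Implicit. Unset Printing Implicit Defensive.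
Import Order.TTheory GRing.Theory Num.Theory.
Local Open Scope ring_scope.

Section Defs.
Variable R : realType.

Definition Lambda (z : R) : R := expR z / (1 + expR z).

Definition dotv (k : nat) (x y : 'rV[R]_k) : R := \sum_(l < k) x 0 l * y 0 l.

Variables (N M k : nat).

Definition dyad := {p : 'I_N * 'I_N | p.1 != p.2}.

Definition outcome := {ffun dyad -> 'I_M.+1}.

Variables (X : 'I_N -> 'I_N -> 'rV[R]_k) (alpha gamma : 'I_N -> R)
          (beta0 : 'rV[R]_k) (lam : nat -> R).
(* lam m = lambda_{m0}, used for 1 <= m <= M *)

Definition index_ij (i j : 'I_N) : R := dotv (X i j) beta0 + alpha i + gamma j.

Definition ologit_pmf (i j : 'I_N) (m : 'I_M.+1) : R :=
  let v := index_ij i j in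
  if (m == 0 :> nat) then 1 - Lambda (v - lam 1)
  else if (m == M :> nat) then Lambda (v - lam M)
  else Lambda (v - lam m) - Lambda (v - lam m.+1).

(* joint conditional law given (X,F): independent across dyads *)
Definition law (w : outcome) : R :=
  \prod_(d : dyad) ologit_pmf (val d).1 (val d).2 (w d).

Definition Pr (E : pred outcome) : R := \sum_(w | E w) law w.

Definition condPr (A B : pred outcome) : R :=
  Pr (fun w => A w && B w) / Pr B.

(* Y_ij as a natural number (0 on the diagonal, never used) *)
Definition Yv (w : outcome) (i j : 'I_N) : nat :=
  oapp (fun d : dyad => nat_of_ord (w d)) 0%N (insub (i, j)).

Definition Dv (w : outcome) (i j : 'I_N) (m : nat) : R := (m <= Yv w i j)%N%:R.

Definition Zsig (i1 i2 j1 j2 : 'I_N) (m11 m12 m21 m22 : nat) (w : outcome) : R :=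
  2^-1 * ((Dv w i1 j1 m11 - Dv w i1 j2 m12) - (Dv w i2 j1 m21 - Dv w i2 j2 m22)).

Definition rsig (i1 i2 j1 j2 : 'I_N) : 'rV[R]_k :=
  (X i1 j1 - X i1 j2) - (X i2 j1 - X i2 j2).

Definition lam0 (m11 m12 m21 m22 : nat) : R :=
  (lam m11 - lam m12) - (lam m21 - lam m22).

End Defs.

(* Main.v *)
Require Import Defs.
From HB Require Import structures.
From mathcomp Require Import all_boot all_order all_algebra.
From mathcomp Require Import reals.
From mathcomp Require Import sequences exp.
From mathcomp Require Import ring lra.
Set Implicit Arguments. Unset Strict Implicit. Unset Printing Implicit Defensive.
Import Order.TTheory GRing.Theory Num.Theory.
Local Open Scope ring_scope.

Section S.
Variables (R : realType) (N M k : nat) (X : 'I_N -> 'I_N -> 'rV[R]_k) (alpha gamma : 'I_N -> R)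
  (beta0 : 'rV[R]_k) (lam : nat -> R).

Definition pmf (d : dyad N) (m : 'I_M.+1) := ologit_pmf X alpha gamma beta0 lam (val d).1 (val d).2 m.

Lemma Pr_prod (Q : dyad N -> pred 'I_M.+1) :
  Pr X alpha gamma beta0 lam (fun w : outcome N M => [forall d, Q d (w d)]) =
  \prod_d \sum_(m | Q d m) pmf d m.
Proof.
rewrite /Pr /law big_mkcond /=.
under [RHS]eq_bigr do rewrite big_mkcond.
rewrite bigA_distr_bigA; apply: eq_bigr => w _.
case: forallP => H.
  by apply: eq_bigr => d _; rewrite H.
have /existsP [d nd] : [exists d, ~~ Q d (w d)].
  by rewrite -negb_forall; apply/forallP.
by rewrite (bigD1 d) //= (negbTE nd) mul0r.
Qed.

Lemma Pr4 (d1 d2 d3 d4 : dyad N) (P1 P2 P3 P4 : pred 'I_M.+1) :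
  uniq [:: d1; d2; d3; d4] -> (forall d, \sum_m pmf d m = 1) ->
  Pr X alpha gamma beta0 lam (fun w : outcome N M => [&& P1 (w d1), P2 (w d2), P3 (w d3) & P4 (w d4)])
  = (\sum_(m | P1 m) pmf d1 m) * (\sum_(m | P2 m) pmf d2 m) * (\sum_(m | P3 m) pmf d3 m) * (\sum_(m | P4 m) pmf d4 m).
Proof.
rewrite /= !inE !negb_or => /andP[/and3P[n12 n13 n14] /andP[/andP[n23 n24] /andP[n34 _]]] S1.
pose Q d m := [&& (d == d1) ==> P1 m, (d==d2) ==> P2 m, (d==d3)==>P3 m & (d==d4)==>P4 m].
have -> : Pr X alpha gamma beta0 lam (fun w : outcome N M => [&& P1 (w d1), P2 (w d2), P3 (w d3) & P4 (w d4)]) =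
          Pr X alpha gamma beta0 lam (fun w : outcome N M => [forall d, Q d (w d)]).
  apply: eq_bigl => w; apply/and4P/forallP.
    move=> [h1 h2 h3 h4] d; rewrite /Q.
    by apply/and4P; split; apply/implyP => /eqP ->.
  move=> H; split.
  - by have /and4P[/implyP/(_ (eqxx _)) ? _ _ _] := H d1.
  - by have /and4P[_ /implyP/(_ (eqxx _)) ? _ _] := H d2.
  - by have /and4P[_ _ /implyP/(_ (eqxx _)) ? _] := H d3.
  - by have /and4P[_ _ _ /implyP/(_ (eqxx _)) ?] := H d4.
rewrite Pr_prod.
under eq_bigr => d _.
  have -> : \sum_(m | Q d m) pmf d m =
    (if d == d1 then \sum_(m | P1 m) pmf d1 m else 1) *
    (if d == d2 then \sum_(m | P2 m) pmf d2 m else 1) *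
    (if d == d3 then \sum_(m | P3 m) pmf d3 m else 1) *
    (if d == d4 then \sum_(m | P4 m) pmf d4 m else 1).
    have n21 := n12; have n31 := n13; have n41 := n14; have n32 := n23; have n42 := n24; have n43 := n34.
    rewrite eq_sym in n21; rewrite eq_sym in n31; rewrite eq_sym in n41.
    rewrite eq_sym in n32; rewrite eq_sym in n42; rewrite eq_sym in n43.
    rewrite /Q; case: (eqVneq d d1) => [->|e1]; last case: (eqVneq d d2) => [->|e2];
      last case: (eqVneq d d3) => [->|e3]; last case: (eqVneq d d4) => [->|e4];
      rewrite ?(negbTE n12, negbTE n13, negbTE n14, negbTE n23, negbTE n24, negbTE n34,
                negbTE n21, negbTE n31, negbTE n41, negbTE n32, negbTE n42, negbTE n43) ?mulr1 ?mul1r;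
      try (by apply: eq_bigl => m /=; rewrite ?andbT).
    by rewrite -(S1 d); apply: eq_bigl.
  over.
rewrite !big_split /= -!big_mkcond /=.
by rewrite !big_pred1_eq.
Qed.

Definition Tn (v : R) (n : nat) : R :=
  if n == 0%N then 1 else if (n <= M)%N then Lambda (v - lam n) else 0.

Lemma pmf_tel (d : dyad N) (m : 'I_M.+1) : (1 <= M)%N ->
  pmf d m = Tn (index_ij X alpha gamma beta0 (val d).1 (val d).2) m
          - Tn (index_ij X alpha gamma beta0 (val d).1 (val d).2) m.+1.
Proof.
move=> M1; rewrite /pmf /ologit_pmf /Tn /=.
have mM := ltn_ord m; rewrite ltnS in mM.
case: (eqVneq (m : nat) 0%N) => [->|m0] /=; first by rewrite M1.
case: (eqVneq (m : nat) M) => [->|mM'] /=; first by rewrite ltnn leqnn subr0.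
by rewrite mM; have -> : (m.+1 <= M)%N by rewrite ltn_neqAle mM' mM.
Qed.

Lemma sum_tel (d : dyad N) (c : nat) : (1 <= M)%N -> (c <= M)%N ->
  \sum_(m : 'I_M.+1 | (c <= m)%N) pmf d m =
  Tn (index_ij X alpha gamma beta0 (val d).1 (val d).2) c.
Proof.
move=> M1 cM; set v := index_ij _ _ _ _ _ _.
transitivity (\sum_(c <= i < M.+1) pmf d (inord i)).
  rewrite big_geq_mkord; apply: eq_bigr => i _; by rewrite inord_val.
rewrite (telescope_sumr_eq (fun n => - Tn v n)); last first.
  move=> i /andP[_ iM]; rewrite pmf_tel // inordK //; ring.
  by apply: leqW.
have -> : Tn v M.+1 = 0 by rewrite /Tn /= ltnn.
by rewrite oppr0 sub0r opprK.
Qed.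
End S.

Lemma zchar (R : realType) (b1 b2 b3 b4 : bool) :
  (2^-1 * ((b1%:R - b2%:R) - (b3%:R - b4%:R)) == 1 :> R) = [&& b1, ~~b2, ~~b3 & b4].
Proof.
case: b1; case: b2; case: b3; case: b4 => /=;
 first [by apply/eqP; field | by apply: lt_eqF; lra].
Qed.

Lemma zcharN (R : realType) (b1 b2 b3 b4 : bool) :
  (2^-1 * ((b1%:R - b2%:R) - (b3%:R - b4%:R)) == -1 :> R) = [&& ~~b1, b2, b3 & ~~b4].
Proof.
case: b1; case: b2; case: b3; case: b4 => /=;
 first [by apply/eqP; field | by apply: gt_eqF; lra].
Qed.

Lemma dotvB (R : realType) k (a b c : 'rV[R]_k) : dotv (a - b) c = dotv a c - dotv b c.
Proof. by rewrite /dotv -sumrB; apply: eq_bigr => l _; rewrite !mxE mulrBl. Qed.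


Lemma lam_alg (R : realType) (x1 x2 x3 x4 : R) :
  Lambda x1 * (1 - Lambda x2) * (1 - Lambda x3) * Lambda x4 /
  (Lambda x1 * (1 - Lambda x2) * (1 - Lambda x3) * Lambda x4 +
   (1 - Lambda x1) * Lambda x2 * Lambda x3 * (1 - Lambda x4)) =
  Lambda (x1 - x2 - x3 + x4).
Proof.
rewrite /Lambda !expRD !expRN.
have p1 := expR_gt0 x1; have p2 := expR_gt0 x2; have p3 := expR_gt0 x3; have p4 := expR_gt0 x4.
set a := expR x1 in p1 *; set b := expR x2 in p2 *; set c := expR x3 in p3 *; set d := expR x4 in p4 *.
have q1 : 1 + a != 0 by rewrite gt_eqF // ltr_wpDl.
have q2 : 1 + b != 0 by rewrite gt_eqF // ltr_wpDl.
have q3 : 1 + c != 0 by rewrite gt_eqF // ltr_wpDl.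
have q4 : 1 + d != 0 by rewrite gt_eqF // ltr_wpDl.
have r1 : a != 0 by rewrite gt_eqF.
have r2 : b != 0 by rewrite gt_eqF.
have r3 : c != 0 by rewrite gt_eqF.
have r4 : d != 0 by rewrite gt_eqF.
have s1 : a * d + b * c != 0 by rewrite gt_eqF // addr_gt0 // mulr_gt0.
have s2 : b * c + a * d != 0 by rewrite addrC.
have s3 : a * c^-1 * b^-1 * d + 1 != 0.
  by rewrite gt_eqF // addr_gt0 // !mulr_gt0 // invr_gt0.
field.
by rewrite r3 r2 s2 q4 q3 q2 q1.
Qed.

Theorem theorem3 (R : realType) (N M k : nat)
  (X : 'I_N -> 'I_N -> 'rV[R]_k) (alpha gamma : 'I_N -> R)
  (beta0 : 'rV[R]_k) (lam : nat -> R) :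
  (4 <= N)%N -> (1 <= M)%N ->
  (forall a b : nat, (1 <= a)%N -> (a <= b)%N -> (b <= M)%N -> lam a <= lam b) ->
  forall i1 i2 j1 j2 : 'I_N, uniq [:: i1; i2; j1; j2] ->
  forall m11 m12 m21 m22 : nat,
    (1 <= m11 <= M)%N -> (1 <= m12 <= M)%N ->
    (1 <= m21 <= M)%N -> (1 <= m22 <= M)%N ->
  let Z := @Zsig R N M i1 i2 j1 j2 m11 m12 m21 m22 in
  condPr X alpha gamma beta0 lam
    (fun w => Z w == 1)
    (fun w => (Z w == 1) || (Z w == -1))
  = Lambda (dotv (rsig X i1 i2 j1 j2) beta0 - lam0 lam m11 m12 m21 m22).
Proof.
move=> _ M1 _ i1 i2 j1 j2 U m11 m12 m21 m22 H11 H12 H21 H22 Z.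
move: U; rewrite /= !inE !negb_or => /andP[/and3P[a12 a11 a122] /andP[/andP[a21 a22] /andP[b12 _]]].
have e11 : (i1, j1).1 != (i1, j1).2 by [].
have e12 : (i1, j2).1 != (i1, j2).2 by [].
have e21 : (i2, j1).1 != (i2, j1).2 by [].
have e22 : (i2, j2).1 != (i2, j2).2 by [].
pose d11 : dyad N := Sub (i1, j1) e11.
pose d12 : dyad N := Sub (i1, j2) e12.
pose d21 : dyad N := Sub (i2, j1) e21.
pose d22 : dyad N := Sub (i2, j2) e22.
have Y11 w : Yv w i1 j1 = w d11 by rewrite /Yv (@insubT _ (fun p : 'I_N * 'I_N => p.1 != p.2) (dyad N) _ e11).
have Y12 w : Yv w i1 j2 = w d12 by rewrite /Yv (@insubT _ (fun p : 'I_N * 'I_N => p.1 != p.2) (dyad N) _ e12).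
have Y21 w : Yv w i2 j1 = w d21 by rewrite /Yv (@insubT _ (fun p : 'I_N * 'I_N => p.1 != p.2) (dyad N) _ e21).
have Y22 w : Yv w i2 j2 = w d22 by rewrite /Yv (@insubT _ (fun p : 'I_N * 'I_N => p.1 != p.2) (dyad N) _ e22).
have Zp w : (Z w == 1) = [&& (m11 <= w d11)%N, ~~ (m12 <= w d12)%N, ~~ (m21 <= w d21)%N & (m22 <= w d22)%N].
  by rewrite /Z /Zsig /Dv Y11 Y12 Y21 Y22 zchar.
have Zm w : (Z w == -1) = [&& ~~ (m11 <= w d11)%N, (m12 <= w d12)%N, (m21 <= w d21)%N & ~~ (m22 <= w d22)%N].
  by rewrite /Z /Zsig /Dv Y11 Y12 Y21 Y22 zcharN.
have S1 d : \sum_(m < M.+1) pmf X alpha gamma beta0 lam d m = 1.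
  have := sum_tel X alpha gamma beta0 lam d M1 (leq0n M); rewrite /Tn /= => <-.
  by apply: eq_bigl.
have Pge d c : (1 <= c <= M)%N -> \sum_(m < M.+1 | (c <= m)%N) pmf X alpha gamma beta0 lam d m
   = Lambda (index_ij X alpha gamma beta0 (val d).1 (val d).2 - lam c).
  case/andP=> c1 cM; rewrite (sum_tel X alpha gamma beta0 lam d M1 cM) /Tn cM.
  by case: eqP c1 => // ->.
have Plt d c : (1 <= c <= M)%N -> \sum_(m < M.+1 | ~~ (c <= m)%N) pmf X alpha gamma beta0 lam d m
   = 1 - Lambda (index_ij X alpha gamma beta0 (val d).1 (val d).2 - lam c).
  move=> hc; have := S1 d; rewrite (bigID (fun m : 'I_M.+1 => (c <= m)%N)) /= Pge // => <-; ring.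
have n1 : (1 == -1 :> R) = false by apply: gt_eqF; lra.
rewrite /condPr.
have -> : Pr X alpha gamma beta0 lam (fun w => (Z w == 1) && ((Z w == 1) || (Z w == -1)))
   = Pr X alpha gamma beta0 lam (fun w => Z w == 1).
  by apply: eq_bigl => w; case: (Z w == 1).
have -> : Pr X alpha gamma beta0 lam (fun w => (Z w == 1) || (Z w == -1))
   = Pr X alpha gamma beta0 lam (fun w => Z w == 1) + Pr X alpha gamma beta0 lam (fun w => Z w == -1).
  rewrite /Pr (bigID (fun w => Z w == 1)) /=; congr (_ + _); apply: eq_bigl => w.
    by case: (Z w == 1); rewrite ?andbT ?andbF.
  by case: (eqVneq (Z w) 1) => [->|] /=; rewrite ?n1 ?andbT ?andbF ?orFb.
have -> : Pr X alpha gamma beta0 lam (fun w => Z w == 1) = Pr X alpha gamma beta0 lam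
  (fun w : outcome N M => [&& (m11 <= w d11)%N, ~~ (m12 <= w d12)%N, ~~ (m21 <= w d21)%N & (m22 <= w d22)%N]).
  by apply: eq_bigl => w; rewrite Zp.
have -> : Pr X alpha gamma beta0 lam (fun w => Z w == -1) = Pr X alpha gamma beta0 lam
  (fun w : outcome N M => [&& ~~ (m11 <= w d11)%N, (m12 <= w d12)%N, (m21 <= w d21)%N & ~~ (m22 <= w d22)%N]).
  by apply: eq_bigl => w; rewrite Zm.
have Ud : uniq [:: d11; d12; d21; d22].
  rewrite /= !inE -!val_eqE /= !xpair_eqE (negbTE b12) (negbTE a12) ?andbF ?andFb //.
rewrite (@Pr4 R N M k X alpha gamma beta0 lam d11 d12 d21 d22
   (fun m => (m11 <= m)%N) (fun m => ~~ (m12 <= m)%N) (fun m => ~~ (m21 <= m)%N) (fun m => (m22 <= m)%N)) //.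
rewrite (@Pr4 R N M k X alpha gamma beta0 lam d11 d12 d21 d22
   (fun m => ~~ (m11 <= m)%N) (fun m => (m12 <= m)%N) (fun m => (m21 <= m)%N) (fun m => ~~ (m22 <= m)%N)) //.
rewrite !Pge // !Plt //= !dotvB /lam0 lam_alg; congr Lambda.
by rewrite /index_ij; ring.
Qed.
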